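(* The map $\Psi=(F,A)\colon \mathcal{T}(\mathrm{OP})\to I^{\mathcal D}\times I^{\mathbb N}$ defined below is a homeomorphism satisfying $\Psi\circ\kappa(g)=\operatorname{diag}(g)\circ\Psi$ for every $g\in\mathcal D$. In particular, $(\mathcal{T}(\mathrm{OP}),\kappa)$ and $(I^{\mathcal D}\times I^{\mathbb N},\operatorname{diag})$ are isomorphic as topological $\mathcal D$-spaces.
   Context: Let $I=\{0,1\}$. The graded graph $\mathrm{OP}$ (graph of ordered pairs) has vertex sets $\mathrm{OP}_0=I$ and $\mathrm{OP}_{n+1}=\mathrm{OP}_n\times\mathrm{OP}_n$. For each $v=(v_0,v_1)\in\mathrm{OP}_{n+1}$ there is an edge of index $0$ from $v_0$ to $v$ and an edge of index $1$ from $v_1$ to $v$ (two distinct edges if $v_0=v_1$), and there are no other edges. $\mathcal T(\mathrm{OP})$ is the set of infinite paths $x=(v_0,e_0,v_1,e_1,\dots)$ with $v_n\in\mathrm{OP}_n$ and $e_n$ an edge from $v_n$ to $v_{n+1}$, with the topology whose base consists of cylinder sets (paths with a prescribed initial segment). A path is determined by its vertex on floor $N$ together with the indices of its edges below floor $N$. Let $\mathcal D=\bigoplus_{i\ge 0}\mathbb Z/2\mathbb Z$ with generators $g_0,g_1,\dots$, and $\mathcal D_n=\langle g_0,\dots,g_{n-1}\rangle$, $\mathcal D_0=\{0\}$. The canonical action $\kappa$ of $\mathcal D$ on $\mathcal T(\mathrm{OP})$ is defined on generators: $\kappa(g_n)x$ is the path that coincides with $x$ from floor $n+1$ on, whose edge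 from floor $n$ to floor $n+1$ has index different from the corresponding edge of $x$, and whose edges between floors $i$ and $i+1$, $0\le i<n$, have the same indices as those of $x$. $I^{\mathbb N}$ is the set of sequences $\alpha=(\alpha_i)_{i\ge1}$ with coordinatewise addition mod 2; $I^{\mathcal D}$ is the set of configurations $w\colon\mathcal D\to I$; both carry the product topology. Let $\tau\colon\mathcal D\to I^{\mathbb N}$, $\tau(\sum_i\alpha_i g_{i-1})=(\alpha_i)_{i\ge1}$. The action $\operatorname{diag}$ of $\mathcal D$ on $I^{\mathcal D}\times I^{\mathbb N}$ is $\operatorname{diag}(g)(w,\alpha)=(w(\cdot+g),\alpha+\tau(g))$. Define $\Phi$ assigning to each $v\in\mathrm{OP}_n$ a configuration $\Phi[v]\in I^{\mathcal D_n}$: for $v\in\mathrm{OP}_0$, $\Phi[v](0)=v$; for $v=(v_0,v_1)\in\mathrm{OP}_{n+1}$, $\Phi[v](h)=\Phi[v_0](h)$ for $h\in\mathcal D_n$ and $\Phi[v](h)=\Phi[v_1](g_n+h)$ for $h\in\mathcal D_{n+1}\setminus\mathcal D_n$. For a path $x$ with vertices $v_n$ and edges $e_n$, let $A[x]=\alpha$ where $\alpha_n$ is the index of $e_{n-1}$ ($n\ge1$), and let $F[x]\in I^{\mathcal D}$ be given by $F[x](g)=\Phi[v_n](g+\sum_{i=0}^{n-1}\alpha_{i+1}g_i)$ for $g\in\mathcal D_n$, $n\ge1$ (these prescriptions are consistent). Set $\Psi[x]=(F[x],A[x])$. *)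

(* Defs.v *)
From Stdlib Require Import Arith Lia List Bool.

(* Vertices of all floors live in one type of binary trees;
   OP_0 = leaves (= I), OP_{n+1} = pairs (Node v0 v1) of elements of OP_n. *)
Inductive tree : Type := Leaf (b : bool) | Node (t0 t1 : tree).

Fixpoint isOP (n : nat) (t : tree) : bool :=
  match n, t with
  | 0, Leaf _ => true
  | S m, Node a b => isOP m a && isOP m b
  | _, _ => false
  end.

(* the source of the edge of index i into the vertex t = (v0,v1) is v_i *)
Definition child (i : bool) (t : tree) : tree :=
  match t with Node a b => if i then b else a | Leaf _ => t end.

(* An infinite path: vertices v_n in OP_n, and e_n (recorded by its index)
   an edge from v_n to v_{n+1}. *)
Record path := Path {
  pv : nat -> tree;
  pe : nat -> bool;
  pv_OP : forall n, isOP n (pv n) = true;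
  p_edge : forall n, child (pe n) (pv (S n)) = pv n }.

Fixpoint desc (e : nat -> bool) (d k : nat) (w : tree) : tree :=
  match d with 0 => w | S d' => child (e k) (desc e d' (S k) w) end.

Lemma isOP_child n i t : isOP (S n) t = true -> isOP n (child i t) = true.
Proof.
  destruct t as [b|a c]; simpl; [discriminate|].
  intros H; apply andb_prop in H; destruct H, i; auto.
Qed.

Lemma isOP_desc e d : forall k w, isOP (d + k) w = true -> isOP k (desc e d k w) = true.
Proof.
  induction d as [|d IH]; intros k w H; simpl; [exact H|].
  apply isOP_child. apply IH. rewrite Nat.add_succ_r. exact H.
Qed.

(* The path that coincides with x from floor N on, and has edge indices e'
   (e' must agree with x's indices from N on). *)
Definition rec_v (x : path) (e' : nat -> bool) (N : nat) (k : nat) : tree :=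
  desc e' (N - k) k (pv x (N - k + k)).

Lemma rec_v_OP x e' N k : isOP k (rec_v x e' N k) = true.
Proof. unfold rec_v. apply isOP_desc. apply pv_OP. Qed.

Lemma rec_v_edge x e' N (H : forall k, N <= k -> e' k = pe x k) n :
  child (e' n) (rec_v x e' N (S n)) = rec_v x e' N n.
Proof.
  unfold rec_v. destruct (le_lt_dec N n) as [Hn|Hn].
  - replace (N - n) with 0 by lia. replace (N - S n) with 0 by lia. simpl.
    rewrite H by exact Hn. apply p_edge.
  - assert (E2 : N - n + n = N - S n + S n) by lia. rewrite E2.
    assert (E : N - n = S (N - S n)) by lia. rewrite E. reflexivity.
Qed.

Definition reconstruct (x : path) (e' : nat -> bool) (N : nat)
  (H : forall k, N <= k -> e' k = pe x k) : path :=
  {| pv := rec_v x e' N; pe := e'; pv_OP := rec_v_OP x e' N;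
     p_edge := rec_v_edge x e' N H |}.

(* Encoded as nat via binary expansion: g = sum_i a_i g_i  <->  sum_i a_i 2^i;
   group law = bitwise xor; g_n = 2^n; D_n = { h | h < 2^n }. *)
Definition D := nat.
Definition dadd (g h : D) : D := Nat.lxor g h.
Definition dgen (n : nat) : D := 2 ^ n.

Definition flip_at (n : nat) (e : nat -> bool) : nat -> bool :=
  fun k => if Nat.eqb k n then negb (e k) else e k.

Lemma flip_at_above n (x : path) : forall k, S n <= k -> flip_at n (pe x) k = pe x k.
Proof.
  intros k Hk. unfold flip_at. replace (Nat.eqb k n) with false; [reflexivity|].
  symmetry. apply Nat.eqb_neq. lia.
Qed.

Definition kappa_gen (n : nat) (x : path) : path :=
  reconstruct x (flip_at n (pe x)) (S n) (flip_at_above n x).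

(* kappa(g) = composite of the kappa(g_i) over the bits i of g (all < g) *)
Definition kappa (g : D) (x : path) : path :=
  fold_right (fun i acc => if Nat.testbit g i then kappa_gen i acc else acc) x (seq 0 g).

(* I^N is represented as nat -> bool with  alpha k  standing for  alpha_{k+1}. *)
Definition seqI := nat -> bool.
Definition config := D -> bool.

(* tau(sum_i alpha_i g_{i-1}) = (alpha_i)_{i>=1}  (shifted indexing) *)
Definition tau (g : D) : seqI := fun k => Nat.testbit g k.

Definition diag (g : D) (p : config * seqI) : config * seqI :=
  (fun h => fst p (dadd h g), fun k => xorb (snd p k) (tau g k)).

Fixpoint Phi (n : nat) (t : tree) (h : D) : bool :=
  match n, t with
  | 0, Leaf b => b
  | S m, Node a b => if h <? 2 ^ m then Phi m a h else Phi m b (dadd (dgen m) h)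
  | _, _ => false
  end.

Definition dsum (a : nat -> bool) (n : nat) : D :=
  fold_right dadd 0 (map (fun i => if a i then dgen i else 0) (seq 0 n)).

Definition A (x : path) : seqI := pe x.

(* F[x](g) computed at floor n = g+1 (g lies in D_{g+1}) *)
Definition F (x : path) : config :=
  fun g => Phi (S g) (pv x (S g)) (dadd g (dsum (pe x) (S g))).

Definition Psi (x : path) : config * seqI := (F x, A x).

(* T(OP): base = cylinder sets (paths with prescribed initial segment
   v_0,e_0,...,e_{n-1},v_n). *)
Definition path_open (U : path -> Prop) : Prop :=
  forall x, U x -> exists n, forall y,
    (forall k, k <= n -> pv y k = pv x k) ->
    (forall k, k < n -> pe y k = pe x k) -> U y.

(* product topology on I^D x I^N, I discrete *)
Definition prod_open (U : config * seqI -> Prop) : Prop :=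
  forall p, U p -> exists (s1 s2 : list nat), forall q,
    (forall h, In h s1 -> fst q h = fst p h) ->
    (forall k, In k s2 -> snd q k = snd p k) -> U q.

Definition continuous {X Y : Type} (oX : (X -> Prop) -> Prop) (oY : (Y -> Prop) -> Prop)
  (f : X -> Y) : Prop :=
  forall V, oY V -> oX (fun x => V (f x)).

Definition homeomorphism {X Y : Type} (oX : (X -> Prop) -> Prop) (oY : (Y -> Prop) -> Prop)
  (f : X -> Y) : Prop :=
  exists g : Y -> X, (forall x, g (f x) = x) /\ (forall y, f (g y) = y) /\
    continuous oX oY f /\ continuous oY oX g.

(* Main.v *)
Require Import Defs.
From Stdlib Require Import Arith Lia List Bool ProofIrrelevance FunctionalExtensionality Btauto.

Lemma lt_pow2_iff a n : a < 2 ^ n <-> (forall k, n <= k -> Nat.testbit a k = false).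
Proof.
  split.
  - intros H k Hk. rewrite <- (Nat.mod_small a (2^n)) by exact H.
    apply Nat.mod_pow2_bits_high; exact Hk.
  - intros H. assert (E : a = a mod 2 ^ n).
    { apply Nat.bits_inj. intro k. destruct (le_lt_dec n k) as [Hk|Hk].
      + rewrite H by exact Hk. rewrite Nat.mod_pow2_bits_high; auto.
      + rewrite Nat.mod_pow2_bits_low; auto. }
    rewrite E. apply Nat.mod_upper_bound. apply Nat.pow_nonzero. lia.
Qed.

Lemma lxor_lt a b n : a < 2 ^ n -> b < 2 ^ n -> Nat.lxor a b < 2 ^ n.
Proof.
  rewrite !lt_pow2_iff. intros Ha Hb k Hk. rewrite Nat.lxor_spec, Ha, Hb; auto.
Qed.

Lemma pow2_lt_S n : 2 ^ n < 2 ^ S n.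
Proof. simpl. pose proof (Nat.pow_nonzero 2 n). lia. Qed.

Lemma pow2_le n m : n <= m -> 2 ^ n <= 2 ^ m.
Proof. intros; apply Nat.pow_le_mono_r; lia. Qed.

Lemma lt_pow2_self n : n < 2 ^ n.
Proof. apply Nat.pow_gt_lin_r. lia. Qed.

Lemma xor_pow_ge n h : h < 2 ^ n -> ~ (Nat.lxor h (2 ^ n) < 2 ^ n).
Proof.
  intros H1 H2. rewrite lt_pow2_iff in H1, H2. specialize (H2 n (le_n _)).
  rewrite Nat.lxor_spec, H1, Nat.pow2_bits_true in H2 by lia. discriminate.
Qed.

Lemma xor_pow_lt n h : h < 2 ^ S n -> ~ h < 2 ^ n -> Nat.lxor (2 ^ n) h < 2 ^ n.
Proof.
  intros H1 H2. rewrite lt_pow2_iff in H1 |- *. intros k Hk.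
  rewrite Nat.lxor_spec, Nat.pow2_bits_eqb.
  destruct (Nat.eq_dec n k) as [->|Hne].
  - rewrite Nat.eqb_refl. destruct (Nat.testbit h k) eqn:E; auto.
    exfalso; apply H2. apply lt_pow2_iff. intros j Hj.
    destruct (Nat.eq_dec j k); [subst; auto|]. apply H1; lia.
  - apply Nat.eqb_neq in Hne. rewrite Hne. apply H1. apply Nat.eqb_neq in Hne. lia.
Qed.

Lemma dsum_S a n : dsum a (S n) = dadd (dsum a n) (if a n then dgen n else 0).
Proof.
  unfold dsum. rewrite seq_S, map_app, fold_right_app. simpl.
  unfold dadd. rewrite Nat.lxor_0_r.
  generalize (if a n then dgen n else 0). intro c.
  induction (seq 0 n) as [|i l IH]; simpl.
  - rewrite Nat.lxor_0_l. reflexivity.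
  - unfold dadd in *. rewrite IH, Nat.lxor_assoc. reflexivity.
Qed.

Lemma dsum_lt a n : dsum a n < 2 ^ n.
Proof.
  induction n as [|n IH].
  - unfold dsum; simpl; lia.
  - rewrite dsum_S. unfold dadd. apply lxor_lt.
    + pose proof (pow2_lt_S n); lia.
    + destruct (a n); unfold dgen. apply pow2_lt_S. pose proof (Nat.pow_nonzero 2 (S n)); lia.
Qed.

Lemma dsum_ext a b n : (forall k, k < n -> a k = b k) -> dsum a n = dsum b n.
Proof.
  induction n as [|n IH]; intros H; [reflexivity|].
  rewrite !dsum_S, IH. rewrite H by lia. reflexivity. intros; apply H; lia.
Qed.
Fixpoint build (n : nat) (f : D -> bool) : tree :=
  match n with
  | 0 => Leaf (f 0)
  | S m => Node (build m f) (build m (fun h => f (dadd (dgen m) h)))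
  end.

Lemma build_OP n : forall f, isOP n (build n f) = true.
Proof. induction n; intros; simpl; auto. rewrite !IHn. reflexivity. Qed.

Lemma Phi_build n : forall f h, h < 2 ^ n -> Phi n (build n f) h = f h.
Proof.
  induction n as [|n IH]; intros f h Hh; simpl.
  - simpl in Hh. f_equal. lia.
  - destruct (h <? 2 ^ n) eqn:E.
    + apply IH. apply Nat.ltb_lt; auto.
    + apply Nat.ltb_ge in E. rewrite IH. unfold dadd, dgen.
      rewrite <- Nat.lxor_assoc, Nat.lxor_nilpotent, Nat.lxor_0_l. reflexivity.
      apply xor_pow_lt; [exact Hh|lia].
Qed.

Lemma build_ext n : forall f g, (forall h, h < 2 ^ n -> f h = g h) -> build n f = build n g.
Proof.
  induction n as [|n IH]; intros f g H; simpl.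
  - rewrite H; auto.
  - f_equal; apply IH; intros h Hh.
    + apply H. pose proof (pow2_lt_S n). lia.
    + apply H. unfold dadd, dgen. apply lxor_lt. apply pow2_lt_S.
      pose proof (pow2_lt_S n). lia.
Qed.

Lemma build_Phi n : forall t, isOP n t = true -> build n (Phi n t) = t.
Proof.
  induction n as [|n IH]; intros t Ht; destruct t as [b|a c]; simpl in *; try discriminate.
  - reflexivity.
  - apply andb_prop in Ht. destruct Ht as [Ha Hc]. f_equal.
    + transitivity (build n (Phi n a)); [|apply IH; auto]. apply build_ext. intros h Hh.
      apply Nat.ltb_lt in Hh. rewrite Hh. reflexivity.
    + transitivity (build n (Phi n c)); [|apply IH; auto]. apply build_ext. intros h Hh.
      destruct (dadd (dgen n) h <? 2 ^ n) eqn:E.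
      * apply Nat.ltb_lt in E. exfalso. apply (xor_pow_ge n h Hh).
        unfold dadd, dgen in E. rewrite Nat.lxor_comm. exact E.
      * unfold dadd, dgen. rewrite <- Nat.lxor_assoc, Nat.lxor_nilpotent, Nat.lxor_0_l. reflexivity.
Qed.

Definition PP (x : path) (n : nat) (g : D) : bool := Phi n (pv x n) (dadd g (dsum (pe x) n)).

Lemma PP_step x n g : g < 2 ^ n -> PP x n g = PP x (S n) g.
Proof.
  intros Hg. unfold PP. rewrite dsum_S.
  pose proof (p_edge x n) as He. pose proof (pv_OP x (S n)) as Ho.
  destruct (pv x (S n)) as [b|a c]; simpl in Ho; [discriminate|].
  assert (Hl : dadd g (dsum (pe x) n) < 2 ^ n) by (apply lxor_lt; auto; apply dsum_lt).
  simpl. rewrite <- He. destruct (pe x n); simpl.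
  - unfold dadd, dgen in *.
    destruct (Nat.lxor g (Nat.lxor (dsum (pe x) n) (2 ^ n)) <? 2 ^ n) eqn:E.
    + apply Nat.ltb_lt in E. exfalso. apply (xor_pow_ge n _ Hl). rewrite Nat.lxor_assoc. exact E.
    + f_equal. apply Nat.bits_inj; intro k; rewrite ?Nat.lxor_spec. btauto.
  - unfold dadd in *. rewrite Nat.lxor_0_r. apply Nat.ltb_lt in Hl. rewrite Hl. reflexivity.
Qed.

Lemma PP_le x n m g : n <= m -> g < 2 ^ n -> PP x n g = PP x m g.
Proof.
  induction 1; intros; auto. rewrite IHle by auto. apply PP_step.
  pose proof (pow2_le n m H). lia.
Qed.

Lemma F_PP x n g : g < 2 ^ n -> F x g = PP x n g.
Proof.
  intros Hg. change (F x g) with (PP x (S g) g).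
  pose proof (lt_pow2_self (S g)).
  rewrite (PP_le x (S g) (max n (S g))), (PP_le x n (max n (S g))); auto; lia.
Qed.
Definition gfun (p : config * seqI) (n : nat) : D -> bool :=
  fun h => fst p (dadd h (dsum (snd p) n)).

Lemma ginv_edge p n : child (snd p n) (build (S n) (gfun p (S n))) = build n (gfun p n).
Proof.
  destruct p as [w a]. simpl. unfold gfun. simpl. rewrite dsum_S. destruct (a n); simpl; f_equal;
  apply functional_extensionality; intro h; f_equal; unfold dadd, dgen;
  apply Nat.bits_inj; intro k; rewrite ?Nat.lxor_spec, ?Nat.bits_0; btauto.
Qed.

Definition ginv (p : config * seqI) : path :=
  {| pv := fun n => build n (gfun p n); pe := snd p;
     pv_OP := fun n => build_OP n (gfun p n); p_edge := ginv_edge p |}.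

Lemma path_eq (x y : path) : pv x = pv y -> pe x = pe y -> x = y.
Proof.
  destruct x as [v e o h], y as [v' e' o' h']; simpl; intros -> ->.
  rewrite (proof_irrelevance _ o o'), (proof_irrelevance _ h h'). reflexivity.
Qed.

Lemma ginv_Psi x : ginv (Psi x) = x.
Proof.
  apply path_eq; simpl; [|reflexivity].
  apply functional_extensionality; intro n.
  transitivity (build n (Phi n (pv x n))); [|apply build_Phi, pv_OP]. apply build_ext. intros h Hh.
  unfold gfun; simpl. unfold A. rewrite (F_PP x n).
  - unfold PP. f_equal. unfold dadd. apply Nat.bits_inj; intro k; rewrite ?Nat.lxor_spec. btauto.
  - apply lxor_lt; auto; apply dsum_lt.
Qed.

Lemma Psi_ginv p : Psi (ginv p) = p.
Proof.
  destruct p as [w a]. unfold Psi. f_equal.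
  apply functional_extensionality; intro g.
  unfold F. change (pv (ginv (w,a)) (S g)) with (build (S g) (gfun (w,a) (S g))).
  change (pe (ginv (w,a))) with a. rewrite Phi_build.
  - unfold gfun, dadd; simpl.
    assert (E : Nat.lxor (Nat.lxor g (dsum a (S g))) (dsum a (S g)) = g)
      by (apply Nat.bits_inj; intro k; rewrite ?Nat.lxor_spec; btauto).
    rewrite E. reflexivity.
  - apply lxor_lt. pose proof (lt_pow2_self (S g)); lia. apply dsum_lt.
Qed.
Lemma in_le_max h l : In h l -> h <= fold_right max 0 l.
Proof.
  induction l as [|a l IH]; simpl; [tauto|]. intros [->|Hi]; [lia|]. specialize (IH Hi); lia.
Qed.

Lemma Psi_cont : continuous path_open prod_open Psi.
Proof.
  intros V HV x Hx. destruct (HV (Psi x) Hx) as [s1 [s2 H]].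
  set (n := S (fold_right max 0 (s1 ++ s2))).
  exists n. intros y Hv He. apply H.
  - intros h Hh. simpl.
    assert (Hn : h < 2 ^ n).
    { pose proof (in_le_max h (s1 ++ s2) (in_or_app _ _ _ (or_introl Hh))).
      pose proof (lt_pow2_self n). unfold n in *. lia. }
    rewrite (F_PP y n), (F_PP x n) by exact Hn. unfold PP.
    rewrite Hv by lia. rewrite (dsum_ext (pe y) (pe x) n) by (intros; apply He; lia). reflexivity.
  - intros k Hk. simpl. unfold A. apply He.
    pose proof (in_le_max k (s1 ++ s2) (in_or_app _ _ _ (or_intror Hk))). unfold n. lia.
Qed.

Lemma ginv_cont : continuous prod_open path_open ginv.
Proof.
  intros U HU p Hp. destruct (HU (ginv p) Hp) as [n H].
  exists (seq 0 (2 ^ n)), (seq 0 n). intros q H1 H2. apply H;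
  destruct p as [w a], q as [w' a']; simpl in *.
  - intros k Hk. simpl. apply build_ext. intros h Hh. unfold gfun.
    assert (Ed : dsum a' k = dsum a k).
    { apply dsum_ext. intros j Hj. apply H2. apply in_seq. lia. }
    cbn [fst snd]. rewrite Ed. apply H1. apply in_seq. split; [lia|].
    simpl. pose proof (pow2_le k n Hk).
    assert (dadd h (dsum a k) < 2 ^ k) by (apply lxor_lt; auto; apply dsum_lt). lia.
  - intros k Hk. simpl. apply H2. apply in_seq. lia.
Qed.
Lemma dsum_flip e i n : i < n -> dsum (flip_at i e) n = dadd (dsum e n) (dgen i).
Proof.
  induction n as [|n IH]; intros Hi; [lia|].
  rewrite !dsum_S. destruct (Nat.eq_dec i n) as [->|Hne].
  - rewrite (dsum_ext (flip_at n e) e n).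
    + unfold flip_at. rewrite Nat.eqb_refl. unfold dadd, dgen.
      destruct (e n); simpl; apply Nat.bits_inj; intro k;
        rewrite ?Nat.lxor_spec, ?Nat.bits_0; btauto.
    + intros k Hk. unfold flip_at. replace (k =? n) with false; auto.
      symmetry; apply Nat.eqb_neq; lia.
  - rewrite IH by lia. unfold flip_at at 1. replace (n =? i) with false.
    2: symmetry; apply Nat.eqb_neq; lia.
    unfold dadd. apply Nat.bits_inj; intro k; rewrite ?Nat.lxor_spec. btauto.
Qed.

Lemma F_kappa_gen i x h : F (kappa_gen i x) h = F x (dadd h (dgen i)).
Proof.
  set (n := max (S i) (S h)).
  assert (Hh : h < 2 ^ n).
  { pose proof (lt_pow2_self n). unfold n in *. lia. }
  assert (Hi : dgen i < 2 ^ n).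
  { unfold dgen. pose proof (pow2_lt_S i). pose proof (pow2_le (S i) n). unfold n in *. lia. }
  rewrite (F_PP _ n) by exact Hh. rewrite (F_PP x n) by (apply lxor_lt; auto).
  unfold PP. change (pv (kappa_gen i x) n) with (rec_v x (flip_at i (pe x)) (S i) n).
  change (pe (kappa_gen i x)) with (flip_at i (pe x)). unfold rec_v.
  replace (S i - n) with 0 by (unfold n; lia). cbn [desc]. rewrite Nat.add_0_l.
  rewrite dsum_flip by (unfold n; lia).
  assert (E : dadd h (dadd (dsum (pe x) n) (dgen i)) = dadd (dadd h (dgen i)) (dsum (pe x) n))
    by (unfold dadd; apply Nat.bits_inj; intro k; rewrite ?Nat.lxor_spec; btauto).
  rewrite E. reflexivity.
Qed.

Lemma pe_kappa_gen i x : pe (kappa_gen i x) = flip_at i (pe x).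
Proof. reflexivity. Qed.

Definition Gs (g : D) (l : list nat) : D :=
  fold_right (fun i acc => if Nat.testbit g i then dadd (dgen i) acc else acc) 0 l.

Definition kfold (g : D) (x : path) (l : list nat) : path :=
  fold_right (fun i acc => if Nat.testbit g i then kappa_gen i acc else acc) x l.

Lemma kfold_F g x l : forall h, F (kfold g x l) h = F x (dadd h (Gs g l)).
Proof.
  induction l as [|a l IH]; intros h; simpl.
  - unfold dadd. rewrite Nat.lxor_0_r. reflexivity.
  - destruct (Nat.testbit g a).
    + rewrite F_kappa_gen, IH. f_equal. unfold dadd.
      apply Nat.bits_inj; intro k; rewrite ?Nat.lxor_spec. btauto.
    + apply IH.
Qed.

Lemma kfold_pe g x l : forall k, pe (kfold g x l) k = xorb (pe x k) (Nat.testbit (Gs g l) k).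
Proof.
  induction l as [|a l IH]; intros k; simpl.
  - rewrite Nat.bits_0, xorb_false_r. reflexivity.
  - destruct (Nat.testbit g a) eqn:E.
    + rewrite pe_kappa_gen. unfold flip_at. rewrite IH. unfold dadd, dgen.
      rewrite Nat.lxor_spec, Nat.pow2_bits_eqb.
      destruct (k =? a) eqn:Ek; apply Nat.eqb_eq in Ek || apply Nat.eqb_neq in Ek.
      * subst. rewrite Nat.eqb_refl. btauto.
      * replace (a =? k) with false by (symmetry; apply Nat.eqb_neq; auto). btauto.
    + apply IH.
Qed.

Lemma Gs_bits g m : forall s k,
  Nat.testbit (Gs g (seq s m)) k = Nat.testbit g k && (s <=? k) && (k <? s + m).
Proof.
  induction m as [|m IH]; intros s k; simpl.
  - rewrite Nat.bits_0. destruct (s <=? k) eqn:E1, (k <? s + 0) eqn:E2;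
    rewrite ?Nat.leb_le, ?Nat.leb_gt, ?Nat.ltb_lt, ?Nat.ltb_ge in *; try lia; btauto.
  - destruct (Nat.testbit g s) eqn:E.
    + unfold dadd, dgen. rewrite Nat.lxor_spec, Nat.pow2_bits_eqb, IH.
      destruct (Nat.lt_trichotomy k s) as [H|[H|H]].
      * replace (s =? k) with false by (symmetry; apply Nat.eqb_neq; lia).
        replace (s <=? k) with false by (symmetry; apply Nat.leb_gt; lia).
        replace (S s <=? k) with false by (symmetry; apply Nat.leb_gt; lia). btauto.
      * subst s. rewrite Nat.eqb_refl, E, Nat.leb_refl.
        replace (S k <=? k) with false by (symmetry; apply Nat.leb_gt; lia).
        replace (k <? k + S m) with true by (symmetry; apply Nat.ltb_lt; lia). btauto.
      * replace (s =? k) with false by (symmetry; apply Nat.eqb_neq; lia).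
        replace (s <=? k) with true by (symmetry; apply Nat.leb_le; lia).
        replace (S s <=? k) with true by (symmetry; apply Nat.leb_le; lia).
        replace (S s + m) with (s + S m) by lia. btauto.
    + rewrite IH. destruct (Nat.eq_dec k s) as [->|H].
      * rewrite E. btauto.
      * replace (S s + m) with (s + S m) by lia.
        destruct (le_lt_dec s k).
        -- replace (s <=? k) with true by (symmetry; apply Nat.leb_le; lia).
           replace (S s <=? k) with true by (symmetry; apply Nat.leb_le; lia). btauto.
        -- replace (s <=? k) with false by (symmetry; apply Nat.leb_gt; lia).
           replace (S s <=? k) with false by (symmetry; apply Nat.leb_gt; lia). btauto.
Qed.

Lemma Gs_seq g : Gs g (seq 0 g) = g.
Proof.
  apply Nat.bits_inj; intro k. rewrite Gs_bits. simpl.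
  destruct (k <? g) eqn:E.
  - btauto.
  - apply Nat.ltb_ge in E. rewrite (proj1 (lt_pow2_iff g g) (lt_pow2_self g) k E). reflexivity.
Qed.

Theorem theorem1 :
  homeomorphism path_open prod_open Psi /\
  (forall (g : D) (x : path), Psi (kappa g x) = diag g (Psi x)).
Proof.
  split.
  - exists ginv. split; [exact ginv_Psi|]. split; [exact Psi_ginv|].
    split; [exact Psi_cont|exact ginv_cont].
  - intros g x. change (kappa g x) with (kfold g x (seq 0 g)).
    unfold Psi, diag. simpl. f_equal; apply functional_extensionality; intro h.
    + rewrite kfold_F, Gs_seq. reflexivity.
    + unfold A. rewrite kfold_pe, Gs_seq. reflexivity.
Qed.
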